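(* Every left nilpotent monoid and every supernilpotent monoid is cancellative.
   Context: Monoids are regarded as semigroups $(S,\cdot)$. For congruences $\alpha_1,\dots,\alpha_n$, $M(\alpha_1,\dots,\alpha_n)$ is the subsemigroup of $S^{\{0,1\}^n}$ generated by all $g$ such that for some $i$ and $(a,b)\in\alpha_i$, $g(x)=a$ if $x_i=0$ and $g(x)=b$ if $x_i=1$; $[\alpha_1,\dots,\alpha_n]$ is the smallest congruence $\delta$ such that for all $f\in M(\alpha_1,\dots,\alpha_n)$: if $(f(x0),f(x1))\in\delta$ for all $x\in\{0,1\}^{n-1}\setminus\{(1,\dots,1)\}$ then $(f(1,\dots,1,0),f(1,\dots,1,1))\in\delta$. With $1$ total and $0$ trivial congruence: $(1]^1=1$, $(1]^{k+1}=[1,(1]^k]$. $S$ is left nilpotent if $(1]^{d+1}=0$ for some $d\in\mathbb N$, and supernilpotent if the $(d+1)$-ary commutator $[1,\dots,1]=0$ for some $d\in\mathbb N$. *)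

(* Defs.v *)
From mathcomp Require Import all_boot.
Set Implicit Arguments. Unset Strict Implicit. Unset Printing Implicit Defensive.

Record monoid := Monoid {
  carrier :> Type;
  mop : carrier -> carrier -> carrier;
  mone : carrier;
  mopA : forall x y z, mop x (mop y z) = mop (mop x y) z;
  mop1x : forall x, mop mone x = x;
  mopx1 : forall x, mop x mone = x }.

Definition relS (S : monoid) := S -> S -> Prop.

Definition congruence (S : monoid) (d : relS S) : Prop :=
  (forall x, d x x) /\ (forall x y, d x y -> d y x) /\
  (forall x y z, d x y -> d y z -> d x z) /\
  (forall a b c e, d a b -> d c e -> d (mop a c) (mop b e)).

Definition total_rel (S : monoid) : relS S := fun _ _ => True.

Definition is_zero_rel (S : monoid) (d : relS S) : Prop :=
  forall x y, d x y <-> x = y.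

(* {0,1}^(n+1) is {ffun 'I_n.+1 -> bool}; false = 0, true = 1.
   The last coordinate is ord_max. *)
Definition cube (n : nat) := {ffun 'I_n.+1 -> bool}.

(* M(alpha_0, ..., alpha_n): subsemigroup of S^{{0,1}^(n+1)} generated
   by the functions x |-> (if x_i = 0 then a else b), (a,b) in alpha_i. *)
Inductive Mgen (S : monoid) (n : nat) (alpha : 'I_n.+1 -> relS S)
  : (cube n -> S) -> Prop :=
  | Mgen_gen (i : 'I_n.+1) (a b : S) (g : cube n -> S) :
      alpha i a b -> (forall x, g x = if x i then b else a) -> Mgen alpha g
  | Mgen_mul (f g h : cube n -> S) :
      Mgen alpha f -> Mgen alpha g -> (forall x, h x = mop (f x) (g x)) ->
      Mgen alpha h.

Definition setlast (n : nat) (y : cube n) (b : bool) : cube n :=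
  [ffun i => if i == ord_max then b else y i].

Definition ones (n : nat) : cube n := [ffun _ => true].

Definition term_cond (S : monoid) (n : nat) (alpha : 'I_n.+1 -> relS S)
  (d : relS S) : Prop :=
  forall f, Mgen alpha f ->
    (forall y : cube n, (exists i : 'I_n.+1, i != ord_max /\ y i = false) ->
        d (f (setlast y false)) (f (setlast y true))) ->
    d (f (setlast (ones n) false)) (f (setlast (ones n) true)).

Definition commutator (S : monoid) (n : nat) (alpha : 'I_n.+1 -> relS S)
  : relS S :=
  fun x y => forall d, congruence d -> term_cond alpha d -> d x y.

Definition binary_comm (S : monoid) (a b : relS S) : relS S :=
  @commutator S 1 (fun i => if val i == 0 then a else b).

(* (1]^k for k >= 1, indexed so that lower_central S k = (1]^(k+1) *)
Fixpoint lower_central (S : monoid) (k : nat) : relS S :=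
  match k with
  | 0 => @total_rel S
  | k'.+1 => @binary_comm S (@total_rel S) (@lower_central S k')
  end.

Definition left_nilpotent (S : monoid) : Prop :=
  exists d : nat, is_zero_rel (@lower_central S d).

Definition supernilpotent (S : monoid) : Prop :=
  exists d : nat, is_zero_rel (@commutator S d (fun _ => @total_rel S)).

Definition cancellative (S : monoid) : Prop :=
  (forall a b c : S, mop a b = mop a c -> b = c) /\
  (forall a b c : S, mop b a = mop c a -> b = c).

(* Main.v *)
Require Import Defs.
From mathcomp Require Import all_boot.
Set Implicit Arguments. Unset Strict Implicit. Unset Printing Implicit Defensive.

Section Gen.
Variables (S : monoid) (n : nat) (alpha : 'I_n.+1 -> relS S) (a : S).

Definition gk (k : nat) (x : cube n) : S := if x (inord k) then mone S else a.

Fixpoint P (k : nat) (x : cube n) : S :=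
  match k with 0 => mone S | k'.+1 => mop (P k' x) (gk k' x) end.
Fixpoint P' (k : nat) (x : cube n) : S :=
  match k with 0 => mone S | k'.+1 => mop (gk k' x) (P' k' x) end.

Hypothesis Ha : forall i : 'I_n.+1, i != ord_max -> alpha i a (mone S).
Hypothesis H1 : alpha ord_max (mone S) (mone S).

Lemma inord_neq k : k < n -> (inord k : 'I_n.+1) != ord_max.
Proof.
move=> kn; apply/eqP => /(congr1 val) /=; rewrite inordK; last by apply: ltnW.
by move=> E; rewrite E ltnn in kn.
Qed.

Lemma gk_M k : k < n -> Mgen alpha (gk k).
Proof.
move=> kn; apply: (@Mgen_gen _ _ _ (inord k) a (mone S)); first exact: Ha (inord_neq kn).
by move=> x; rewrite /gk.
Qed.

Lemma one_M : Mgen alpha (fun _ => mone S).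
Proof. by apply: (@Mgen_gen _ _ _ ord_max (mone S) (mone S)) => // x; case: ifP. Qed.

Lemma P_M k : k <= n -> Mgen alpha (P k).
Proof.
elim: k => [|k IH] kn /=; first exact: one_M.
apply: (@Mgen_mul _ _ _ (P k) (gk k)) => //; first by apply: IH; apply: ltnW.
exact: gk_M.
Qed.

Lemma P'_M k : k <= n -> Mgen alpha (P' k).
Proof.
elim: k => [|k IH] kn /=; first exact: one_M.
apply: (@Mgen_mul _ _ _ (gk k) (P' k)) => //; last by apply: IH; apply: ltnW.
exact: gk_M.
Qed.

Lemma gk_set k y v : k < n -> gk k (setlast y v) = gk k y.
Proof.
by move=> kn; rewrite /gk /setlast ffunE (negbTE (inord_neq kn)).
Qed.

Lemma P_set k y v : k <= n -> P k (setlast y v) = P k y.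
Proof. elim: k => [|k IH] kn //=; rewrite gk_set // IH //; exact: ltnW. Qed.
Lemma P'_set k y v : k <= n -> P' k (setlast y v) = P' k y.
Proof. elim: k => [|k IH] kn //=; rewrite gk_set // IH //; exact: ltnW. Qed.

Lemma P_ones k : P k (ones n) = mone S.
Proof. elim: k => [|k IH] //=; by rewrite IH /gk /ones ffunE mopx1. Qed.
Lemma P'_ones k : P' k (ones n) = mone S.
Proof. elim: k => [|k IH] //=; by rewrite IH /gk /ones ffunE mopx1. Qed.

Lemma P_canc b c k (y : cube n) : mop a b = mop a c ->
  (exists i, i < k /\ y (inord i) = false) -> mop (P k y) b = mop (P k y) c.
Proof.
move=> Hab; elim: k => [|k IH] [i [ik yi]] //=.
rewrite -!mopA /gk; case: ifP => yk.
  rewrite !mop1x; apply: IH; exists i; split => //.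
  move: ik; rewrite ltnS leq_eqVlt => /orP [/eqP E|] //.
  by rewrite E yk in yi.
by rewrite Hab.
Qed.

Lemma P'_canc b c k (y : cube n) : mop b a = mop c a ->
  (exists i, i < k /\ y (inord i) = false) -> mop b (P' k y) = mop c (P' k y).
Proof.
move=> Hab; elim: k => [|k IH] [i [ik yi]] //=.
rewrite !mopA /gk; case: ifP => yk.
  rewrite !mopx1; apply: IH; exists i; split => //.
  move: ik; rewrite ltnS leq_eqVlt => /orP [/eqP E|] //.
  by rewrite E yk in yi.
by rewrite Hab.
Qed.

Lemma hyp_ex (y : cube n) : (exists i : 'I_n.+1, i != ord_max /\ y i = false) ->
  exists i, i < n /\ y (inord i) = false.
Proof.
move=> [i [ni yi]]; exists i; split; last by rewrite inord_val.
have := ltn_ord i; rewrite ltnS leq_eqVlt => /orP [/eqP E|//].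
by case/eqP: ni; apply: val_inj.
Qed.

Lemma comm_left b c : mop a b = mop a c -> alpha ord_max b c -> commutator alpha b c.
Proof.
move=> Hab Hbc d [dr [ds [dt dc]]] Ht.
pose h := fun x : cube n => if x ord_max then c else b.
have hM : Mgen alpha h by apply: (@Mgen_gen _ _ _ ord_max b c).
have := Ht (fun x => mop (P n x) (h x)).
rewrite !P_set // P_ones /h /setlast !ffunE eqxx !mop1x; apply.
  by apply: (@Mgen_mul _ _ _ (P n) h) => //; exact: P_M.
move=> y /hyp_ex Hy; rewrite !P_set // !ffunE eqxx (P_canc Hab Hy); exact: dr.
Qed.

Lemma comm_right b c : mop b a = mop c a -> alpha ord_max b c -> commutator alpha b c.
Proof.
move=> Hab Hbc d [dr [ds [dt dc]]] Ht.
pose h := fun x : cube n => if x ord_max then c else b.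
have hM : Mgen alpha h by apply: (@Mgen_gen _ _ _ ord_max b c).
have := Ht (fun x => mop (h x) (P' n x)).
rewrite !P'_set // P'_ones /h /setlast !ffunE eqxx !mopx1; apply.
  by apply: (@Mgen_mul _ _ _ h (P' n)) => //; exact: P'_M.
move=> y /hyp_ex Hy; rewrite !P'_set // !ffunE eqxx (P'_canc Hab Hy); exact: dr.
Qed.
End Gen.

Lemma lc_refl (S : monoid) k x : @lower_central S k x x.
Proof. case: k => [|k] //= d [dr _] _; exact: dr. Qed.

Lemma lc_all (S : monoid) (a b c : S) k :
  (mop a b = mop a c \/ mop b a = mop c a) -> @lower_central S k b c.
Proof.
move=> H; elim: k => [|k IH] //=.
have Ha : forall i : 'I_2, i != ord_max ->
   (fun i : 'I_2 => if val i == 0 then @total_rel S else @lower_central S k) i a (mone S).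
  by case=> [[|[|i]] Hi] //.
have H1 : (fun i : 'I_2 => if val i == 0 then @total_rel S else @lower_central S k)
   ord_max (mone S) (mone S) by exact: lc_refl.
case: H => H.
  exact: (comm_left Ha H1 H IH).
exact: (comm_right Ha H1 H IH).
Qed.

Theorem lemma4p3 (S : monoid) :
  (left_nilpotent S -> cancellative S) /\ (supernilpotent S -> cancellative S).
Proof.
split.
  move=> [d Hd]; split=> a b c H; apply/Hd; apply: (lc_all (a:=a)); by [left|right].
move=> [d Hd]; split=> a b c H; apply/Hd.
  by apply: (@comm_left S d (fun _ => @total_rel S) a).
by apply: (@comm_right S d (fun _ => @total_rel S) a).
Qed.
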